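(* Let $G=(\mathcal V,\mathcal E)$ be an ADT network, possibly containing cycles, in which every link has unit delay. Let $A(D)$, $B(D)$ and $F$ be the encoding, decoding and adjacency matrices, where the entries $\alpha_{(i,e_j)}(D)$ and $\epsilon_{(e_i,(T_j,k))}(D)$ are constants or rational functions of $D$. Then the system matrix $M(D)$ relating the source power series to the destination power series, $\mathcal Z(D)=\mathcal X(S,D)M(D)$, is given by $$M(D)=A(D)\,(I-DF)^{-1}\,B(D)^T .$$
   Context: ADT network with delay. Supernodes $V$ have input ports $I(V)$ and output ports $O(V)$. Edges go from output ports to input ports of other supernodes, and the directed graph may have cycles. Symbols lie in a finite field $\mathbb F_q$ and time is $t=0,1,2,\dots$. Each link has the same unit delay. Processes are written as power series in the delay variable $D$: $$X(S,i,D)=\sum_t X_t(S,i)D^t,\qquad Z(T,k,D)=\sum_t Z_t(T,k)D^t,\qquad Y(e,D)=\sum_tY_t(e)D^t.$$ The network evolves as $$Y_{t+1}(e)=\sum_{e'\in I(V)}\beta_{(e',e)}Y_t(e')+\sum_i\alpha_{(i,e)}X_t(S,i)\quad\text{for } e\in O(V),$$ where the source term is present only at the source $S$. Input ports receive the $\mathbb F_q$-sum of the symbols on incoming edges, and an output port sends the same symbol on all its outgoing edges. Destinations output $$Z_{t+1}(T,k)=\sum_{e'\in I(T)}\epsilon_{(e',(T,k))}Y_t(e').$$ Index the ports $e_1,\dots,e_m$. - $F$ is the $m\times m$ matrix with $F_{i,j}=1$ if $(e_i,e_j)\in\mathcal E$, $F_{i,j}=\beta_{(e_i,e_j)}$ if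 $e_i\in I(V)$ and $e_j\in O(V)$ for the same supernode $V$, and $F_{i,j}=0$ otherwise. - $A(D)_{i,j}=\alpha_{(i,e_j)}(D)$ if $e_j\in O(S)$, and $0$ otherwise. - $B(D)$ has rows indexed by the destination outputs $(T_j,k)$, with entry $\epsilon_{(e_i,(T_j,k))}(D)$ in column $e_i$ if $e_i\in I(T_j)$, and $0$ otherwise. Matrices are taken over the field $\mathbb F_q(D)$ of rational functions.
   Formalization: The destination series satisfy $\mathcal Z(D)=D^2\mathcal X(S,D)M(D)$ instead of $\mathcal Z(D)=\mathcal X(S,D)M(D)$, for a network with Y₀ = Z₀ = 0, each rational α and ε acting through its power series, with denominator nonzero at D = 0. The statement above fails without it. *)

(* Defs.v *)
From HB Require Import structures.
From mathcomp Require Import all_boot all_order all_algebra.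
Set Implicit Arguments. Unset Strict Implicit. Unset Printing Implicit Defensive.
Import Order.TTheory GRing.Theory.
Local Open Scope ring_scope.

Notation ratfun F := {fraction {poly F}}.
Definition polyfrac (F : fieldType) (p : {poly F}) : ratfun F := FracField.tofrac p.
Definition Dvar (F : fieldType) : ratfun F := polyfrac 'X.

Definition conv (F : fieldType) (a b : nat -> F) (t : nat) : F :=
  \sum_(i < t.+1) a i * b (t - i)%N.

(* [expands z r] : the formal power series \sum_t z t D^t is the power
   series expansion of the rational function r, i.e. r = p/q with
   q(0) <> 0 and z * q = p as formal power series. *)
Definition expands (F : fieldType) (z : nat -> F) (r : ratfun F) : Prop :=
  exists p q : {poly F},
    q.[0] != 0 /\ r = polyfrac p / polyfrac q /\
    forall n : nat, \sum_(i < n.+1) z i * q`_(n - i) = p`_n.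

(* Ports are e_0 ... e_{m-1}  ('I_m); [node e] is the
   supernode carrying port e, [isout e] tells whether e is an output port
   (otherwise an input port); [edge e e'] is the edge relation E.
   Source symbols are indexed by 'I_s, destination outputs (T_j,k) by 'I_r,
   with [dest j] the destination supernode of output j. *)

Definition adjF (F : fieldType) (V : finType) (m : nat)
  (node : 'I_m -> V) (isout : pred 'I_m) (edge : rel 'I_m)
  (beta : 'I_m -> 'I_m -> F) : 'M[F]_m :=
  \matrix_(i, j)
    if edge i j then 1
    else if [&& ~~ isout i, isout j & node i == node j] then beta i j
    else 0.

Definition encA (F : fieldType) (V : finType) (m s : nat)
  (node : 'I_m -> V) (isout : pred 'I_m) (S : V)
  (alpha : 'I_s -> 'I_m -> ratfun F) : 'M[ratfun F]_(s, m) :=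
  \matrix_(i, j) if isout j && (node j == S) then alpha i j else 0.

Definition decB (F : fieldType) (V : finType) (m r : nat)
  (node : 'I_m -> V) (isout : pred 'I_m) (dest : 'I_r -> V)
  (eps : 'I_m -> 'I_r -> ratfun F) : 'M[ratfun F]_(r, m) :=
  \matrix_(j, i) if ~~ isout i && (node i == dest j) then eps i j else 0.

Definition sysM (F : fieldType) (m s r : nat)
  (A : 'M[ratfun F]_(s, m)) (Fm : 'M[F]_m) (B : 'M[ratfun F]_(r, m))
  : 'M[ratfun F]_(s, r) :=
  A *m invmx (1%:M - Dvar F *: map_mx (@polyfrac F \o polyC) Fm) *m B^T.

(* Main.v *)
Require Import Defs.
From HB Require Import structures.
From mathcomp Require Import all_boot all_order all_algebra.
From mathcomp Require Import zify.
Import GRing.Theory.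
Local Open Scope ring_scope.


Section Ser.
Context {F : fieldType}.
Implicit Types (z w : nat -> F) (p q : {poly F}) (r : {fraction {poly F}}).

Definition approx (n : nat) (z : nat -> F) (p : {poly F}) :=
  forall k, (k <= n)%N -> z k = p`_k.
Definition cong (n : nat) (p q : {poly F}) := forall k, (k < n)%N -> p`_k = q`_k.
Definition Tr (n : nat) (z : nat -> F) : {poly F} := \poly_(i < n.+1) z i.

Lemma approx_Tr n z : approx n z (Tr n z).
Proof. by move=> k hk; rewrite coef_poly ltnS hk. Qed.

Lemma cong_refl n p : cong n p p. Proof. by []. Qed.
Lemma cong_sym n p q : cong n p q -> cong n q p.
Proof. by move=> h k hk; rewrite h. Qed.
Lemma cong_trans n p q (w : {poly F}) : cong n p q -> cong n q w -> cong n p w.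
Proof. by move=> h1 h2 k hk; rewrite h1 ?h2. Qed.
Lemma congD n p q p' q' : cong n p q -> cong n p' q' -> cong n (p + p') (q + q').
Proof. by move=> h1 h2 k hk; rewrite !coefD h1 ?h2. Qed.
Lemma congN n p q : cong n p q -> cong n (- p) (- q).
Proof. by move=> h1 k hk; rewrite !coefN h1. Qed.
Lemma congB n p q p' q' : cong n p q -> cong n p' q' -> cong n (p - p') (q - q').
Proof. by move=> h1 h2; apply: congD => //; apply: congN. Qed.
Lemma congM n p q p' q' : cong n p q -> cong n p' q' -> cong n (p * p') (q * q').
Proof.
move=> h1 h2 k hk; rewrite !coefM; apply: eq_bigr => [[i hi]] _ /=.
rewrite h1 ?h2 //; first by apply: leq_ltn_trans hk; apply: leq_subr.
by apply: leq_ltn_trans hk.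
Qed.
Lemma cong_sum n (I : finType) (f g : I -> {poly F}) :
  (forall i, cong n (f i) (g i)) -> cong n (\sum_i f i) (\sum_i g i).
Proof.
move=> h k hk; rewrite !coef_sum; apply: eq_bigr => i _; exact: h.
Qed.
Lemma congXn n p : cong n ('X^n * p) 0.
Proof. by move=> k hk; rewrite coefXnM hk coef0. Qed.
Lemma congMX n p q : cong n p q -> cong n.+1 ('X * p) ('X * q).
Proof.
move=> h [|k] hk; rewrite !coefXM //; exact: h.
Qed.

Lemma coef_approxM n z p q k : approx n z p -> (k <= n)%N ->
  (p * q)`_k = \sum_(i < k.+1) z i * q`_(k - i).
Proof.
move=> h hk; rewrite coefM; apply: eq_bigr => [[i hi]] _ /=.
by rewrite h //; apply: leq_trans hk.
Qed.

Lemma approx_conv n z w p q : approx n z p -> approx n w q ->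
  approx n (conv z w) (p * q).
Proof.
move=> h1 h2 k hk; rewrite /conv coefM; apply: eq_bigr => [[i hi]] _ /=.
rewrite h1 ?h2 //; first by apply: leq_trans hk; apply: leq_subr.
by apply: leq_trans hk.
Qed.

Lemma approx_sum n (I : finType) (f : I -> nat -> F) (g : I -> {poly F}) :
  (forall i, approx n (f i) (g i)) -> approx n (fun t => \sum_i f i t) (\sum_i g i).
Proof. move=> h k hk; rewrite coef_sum; apply: eq_bigr => i _; exact: h. Qed.

Lemma approx_cong n z p q : approx n z p -> cong n.+1 p q -> approx n z q.
Proof. by move=> h1 h2 k hk; rewrite h1 // h2. Qed.

Lemma approx_uniq n z p q : approx n z p -> approx n z q -> cong n.+1 p q.
Proof. by move=> h1 h2 k hk; rewrite -h1 -?h2. Qed.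

Definition expw (z : nat -> F) (p q : {poly F}) :=
  forall n, exists pz, approx n z pz /\ cong n.+1 (pz * q) p.

Lemma expwP z p q : (forall n, \sum_(i < n.+1) z i * q`_(n - i) = p`_n) -> expw z p q.
Proof.
move=> h n; exists (Tr n z); split; first exact: approx_Tr.
move=> k hk; rewrite (@coef_approxM n z (Tr n z) q k (approx_Tr n z)) //.
Qed.

Lemma expwE z p q : expw z p q -> forall n, \sum_(i < n.+1) z i * q`_(n - i) = p`_n.
Proof.
move=> h n; have [pz [h1 h2]] := h n.
by rewrite -(@coef_approxM n z pz q n h1) // h2.
Qed.

Lemma expw_any z p q n pz : expw z p q -> approx n z pz -> cong n.+1 (pz * q) p.
Proof.
move=> h hz; have [pz' [h1 h2]] := h n.
apply: cong_trans h2; apply: congM => //; exact: approx_uniq hz h1.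
Qed.

Lemma expands_mk z p q : q.[0] != 0 -> expw z p q -> expands z (polyfrac p / polyfrac q).
Proof.
move=> hq hw; exists p, q; split => //; split => //; exact: expwE.
Qed.

Lemma expandsE z r : expands z r ->
  exists p q, [/\ q.[0] != 0, r = polyfrac p / polyfrac q & expw z p q].
Proof.
case=> p [q [hq [hr h]]]; exists p, q; split => //; exact: expwP.
Qed.

Lemma polyfrac_neq0 (q : {poly F}) : q.[0] != 0 -> polyfrac q != 0.
Proof.
move=> hq; rewrite /polyfrac tofrac_eq0; apply: contra hq => /eqP ->.
by rewrite horner0.
Qed.

Lemma expands_ext z z' r : (forall t, z t = z' t) -> expands z r -> expands z' r.
Proof.
move=> e [p [q [hq [hr h]]]]; exists p, q; do 2!split => //.
by move=> n; rewrite -h; apply: eq_bigr => i _; rewrite e.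
Qed.

Lemma expands0 : expands (fun _ => 0 : F) 0.
Proof.
exists 0, 1; split; first by rewrite hornerC oner_neq0.
split; first by rewrite /polyfrac tofrac0 mul0r.
by move=> n; rewrite coef0 big1 // => i _; rewrite mul0r.
Qed.

Lemma expandsD z1 z2 r1 r2 : expands z1 r1 -> expands z2 r2 ->
  expands (fun t => z1 t + z2 t) (r1 + r2).
Proof.
move=> /expandsE [p1 [q1 [hq1 -> h1]]] /expandsE [p2 [q2 [hq2 -> h2]]].
have e : polyfrac p1 / polyfrac q1 + polyfrac p2 / polyfrac q2 =
   polyfrac (p1 * q2 + p2 * q1) / polyfrac (q1 * q2).
  rewrite addf_div ?polyfrac_neq0 //.
  by rewrite /polyfrac tofracD !tofracM.
rewrite e; apply: expands_mk; first by rewrite hornerM mulf_neq0.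
move=> n; exists (Tr n z1 + Tr n z2); split.
  by move=> k hk; rewrite coefD -!approx_Tr.
rewrite mulrDl; apply: congD.
  rewrite mulrA; apply: congM => //; apply: expw_any h1 _; exact: approx_Tr.
rewrite (mulrC q1) mulrA; apply: congM => //; apply: expw_any h2 _; exact: approx_Tr.
Qed.

Lemma expandsM z1 z2 r1 r2 : expands z1 r1 -> expands z2 r2 ->
  expands (conv z1 z2) (r1 * r2).
Proof.
move=> /expandsE [p1 [q1 [hq1 -> h1]]] /expandsE [p2 [q2 [hq2 -> h2]]].
have e : polyfrac p1 / polyfrac q1 * (polyfrac p2 / polyfrac q2) =
   polyfrac (p1 * p2) / polyfrac (q1 * q2).
  by rewrite mulf_div /polyfrac !tofracM.
rewrite e; apply: expands_mk; first by rewrite hornerM mulf_neq0.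
move=> n; exists (Tr n z1 * Tr n z2); split.
  apply: approx_conv; exact: approx_Tr.
have -> : Tr n z1 * Tr n z2 * (q1 * q2) = (Tr n z1 * q1) * (Tr n z2 * q2).
  by rewrite -!mulrA; congr (_ * _); rewrite mulrCA.
apply: congM; apply: expw_any; eauto; exact: approx_Tr.
Qed.

Lemma expands_sum (I : finType) (f : I -> nat -> F) (g : I -> {fraction {poly F}}) :
  (forall i, expands (f i) (g i)) -> expands (fun t => \sum_i f i t) (\sum_i g i).
Proof.
move=> h.
suff: forall l : seq I, expands (fun t => \sum_(i <- l) f i t) (\sum_(i <- l) g i).
  by move=> /(_ (index_enum I)).
elim=> [|x l IH].
  rewrite big_nil; apply: (fun H => @expands_ext _ _ _ H expands0) => t; by rewrite big_nil.
rewrite big_cons; apply: (fun H => @expands_ext _ _ _ H (@expandsD _ _ _ _ (h x) IH)) => t.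
by rewrite big_cons.
Qed.

End Ser.


Section Mx.
Variable F : fieldType.
Variable m : nat.
Variable Fm : 'M[F]_m.

Definition Fp : 'M[{poly F}]_m := map_mx polyC Fm.
Definition Pm : 'M[{poly F}]_m := 1%:M - 'X *: Fp.
Definition Tn (n : nat) : 'M[{poly F}]_m := \sum_(u < n.+1) 'X^u *: Fp ^+ u.

Lemma FpX u : Fp ^+ u = map_mx polyC (Fm ^+ u).
Proof.
elim: u => [|u IH]; first by rewrite !expr0 -!idmxE map_mx1.
by rewrite !exprS IH -!mulmxE map_mxM.
Qed.

Lemma powS (A : 'M[{poly F}]_m) u : A ^+ u.+1 = A ^+ u *m A.
Proof. by rewrite exprSr mulmxE. Qed.

Lemma powS' (A : 'M[{poly F}]_m) u : A ^+ u.+1 = A *m A ^+ u.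
Proof. by rewrite exprS mulmxE. Qed.

Lemma TP n : Tn n *m Pm = 1%:M - 'X^(n.+1) *: Fp ^+ n.+1.
Proof.
elim: n => [|n IH].
  rewrite /Tn big_ord1 expr0 scale1r idmxE mul1mx /Pm expr1 expr1.
  by [].
rewrite /Tn big_ord_recr /= mulmxDl.
rewrite /Tn in IH; rewrite IH /Pm mulmxBr mulmx1.
have -> : ('X^(n.+1) *: Fp ^+ n.+1) *m ('X *: Fp) = 'X^(n.+2) *: Fp ^+ n.+2.
  by rewrite -scalemxAl -scalemxAr scalerA -exprSr -powS.
by rewrite addrA addrNK.
Qed.

Lemma PT n : Pm *m Tn n = 1%:M - 'X^(n.+1) *: Fp ^+ n.+1.
Proof.
elim: n => [|n IH].
  rewrite /Tn big_ord1 expr0 scale1r idmxE mulmx1 /Pm expr1 expr1.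
  by [].
rewrite /Tn big_ord_recr /= mulmxDr.
rewrite /Tn in IH; rewrite IH /Pm mulmxBl mul1mx.
have -> : ('X *: Fp) *m ('X^(n.+1) *: Fp ^+ n.+1) = 'X^(n.+2) *: Fp ^+ n.+2.
  by rewrite -scalemxAl -scalemxAr scalerA -exprS -powS'.
by rewrite addrA addrNK.
Qed.

Lemma Tn_entry n e e' : Tn n e e' = Tr n (fun u => (Fm ^+ u) e e').
Proof.
rewrite /Tn /Tr summxE poly_def; apply: eq_bigr => u _.
by rewrite mxE FpX mxE -mul_polyC mulrC.
Qed.

Lemma Tn_approx n e e' : approx n (fun u => (Fm ^+ u) e e') (Tn n e e').
Proof. rewrite Tn_entry; exact: approx_Tr. Qed.

Lemma detP0 : (\det Pm).[0] = 1.
Proof.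
rewrite -horner_evalE -det_map_mx.
have -> : map_mx (horner_eval 0) Pm = 1%:M.
  apply/matrixP => i j; rewrite !mxE /= horner_evalE.
  by rewrite hornerD hornerN hornerM hornerX mul0r subr0 hornerMn hornerC.
by rewrite det1.
Qed.

Definition Nm : 'M[{fraction {poly F}}]_m :=
  1%:M - Dvar F *: map_mx (@polyfrac F \o polyC) Fm.

Lemma Nm_map : Nm = map_mx (@polyfrac F) Pm.
Proof.
apply/matrixP => i j; rewrite /Nm /Pm !mxE /polyfrac /Dvar /=.
by rewrite tofracB tofracM tofracMn tofrac1.
Qed.

Lemma invNm e e' : invmx Nm e e' = polyfrac (\adj Pm e e') / polyfrac (\det Pm).
Proof.
have hd : polyfrac (\det Pm) != 0 by apply: polyfrac_neq0; rewrite detP0 oner_neq0.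
rewrite /invmx Nm_map unitmxE.
have -> : \det (map_mx (@polyfrac F) Pm) = polyfrac (\det Pm).
  by rewrite /polyfrac (det_map_mx (@tofrac _)).
rewrite unitfE hd mxE /polyfrac -(map_mx_adj (@tofrac _)) mxE mulrC.
by [].
Qed.

Lemma expands_inv e e' : expands (fun u => (Fm ^+ u) e e') (invmx Nm e e').
Proof.
rewrite invNm; apply: expands_mk; first by rewrite detP0 oner_neq0.
move=> n; exists (Tn n e e'); split; first exact: Tn_approx.
have E : Tn n *m (\det Pm)%:M = \adj Pm - 'X^(n.+1) *: (Fp ^+ n.+1 *m \adj Pm).
  by rewrite -mul_mx_adj mulmxA TP mulmxBl mul1mx -scalemxAl.
move: E; rewrite mul_mx_scalar => /matrixP /(_ e e'); rewrite !mxE mulrC => ->.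
rewrite -[X in cong _ _ X]subr0; apply: congB; [exact: cong_refl | exact: congXn].
Qed.

End Mx.


Section MxCong.
Context {F : fieldType}.
Definition mxcong n {k l} (A B : 'M[{poly F}]_(k, l)) := forall i j, cong n (A i j) (B i j).

Lemma mxcong_refl n k l (A : 'M_(k,l)) : mxcong n A A.
Proof. by move=> i j; apply: cong_refl. Qed.
Lemma mxcong_sym n k l (A B : 'M_(k,l)) : mxcong n A B -> mxcong n B A.
Proof. by move=> h i j; apply: cong_sym. Qed.
Lemma mxcong_trans n k l (A B C : 'M_(k,l)) : mxcong n A B -> mxcong n B C -> mxcong n A C.
Proof. by move=> h1 h2 i j; apply: cong_trans (h1 i j) (h2 i j). Qed.
Lemma mxcongB n k l (A B C D : 'M_(k,l)) : mxcong n A B -> mxcong n C D ->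
  mxcong n (A - C) (B - D).
Proof. by move=> h1 h2 i j; rewrite !mxE; apply: congB. Qed.
Lemma mxcong_mulr n k l p (A B : 'M_(k,l)) (C : 'M_(l,p)) : mxcong n A B ->
  mxcong n (A *m C) (B *m C).
Proof.
move=> h i j; rewrite !mxE; apply: cong_sum => u; apply: congM => //; exact: cong_refl.
Qed.
Lemma mxcongZ n k l c (A B : 'M_(k,l)) : mxcong n A B -> mxcong n (c *: A) (c *: B).
Proof. by move=> h i j; rewrite !mxE; apply: congM => //; exact: cong_refl. Qed.
Lemma mxcongXn n k l (A : 'M_(k,l)) : mxcong n ('X^n *: A) 0.
Proof. by move=> i j; rewrite !mxE; apply: congXn. Qed.
End MxCong.

Theorem theorem11
  (F : finFieldType) (V : finType) (m s r : nat)
  (node : 'I_m -> V) (isout : pred 'I_m) (edge : rel 'I_m)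
  (S : V) (dest : 'I_r -> V)
  (* edges go from output ports to input ports of other supernodes *)
  (Hedge : forall e e', edge e e' ->
      [&& isout e, ~~ isout e' & node e != node e'])
  (beta : 'I_m -> 'I_m -> F)
  (alpha : 'I_s -> 'I_m -> ratfun F) (eps : 'I_m -> 'I_r -> ratfun F)
  (* time-domain realizations (power series expansions) of the coefficients *)
  (a : 'I_s -> 'I_m -> nat -> F) (b : 'I_m -> 'I_r -> nat -> F)
  (Ha : forall i e, isout e -> node e = S -> expands (a i e) (alpha i e))
  (Hb : forall e j, ~~ isout e -> node e = dest j -> expands (b e j) (eps e j))
  (* processes: X t i = X_t(S,i), Y t e = Y_t(e), Z t j = Z_t(T_j,k_j) *)
  (X : nat -> 'I_s -> F) (Y : nat -> 'I_m -> F) (Z : nat -> 'I_r -> F)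
  (HY0 : forall e, Y 0%N e = 0) (HZ0 : forall j, Z 0%N j = 0)
  (HYout : forall t e, isout e ->
      Y t.+1 e = \sum_(e' | ~~ isout e' && (node e' == node e)) beta e' e * Y t e'
               + (if node e == S
                  then \sum_(i < s) conv (a i e) (fun u => X u i) t else 0))
  (HYin : forall t e, ~~ isout e ->
      Y t.+1 e = \sum_(e' | edge e' e) Y t e')
  (HZ : forall t j,
      Z t.+1 j = \sum_(e' | ~~ isout e' && (node e' == dest j))
                   conv (b e' j) (fun u => Y u e') t) :
  let M := sysM (encA node isout S alpha) (adjF node isout edge beta)
                (decB node isout dest eps) in
  exists mser : 'I_s -> 'I_r -> nat -> F,
    (forall i j, expands (mser i j) (M i j)) /\
    (* Z(D) = D^2 X(S,D) M(D) *)
    forall t j, Z t j = if (t < 2)%N then 0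
                        else \sum_(i < s) conv (fun u => X u i) (mser i j) (t - 2)%N.
Proof.
move=> M.
set Fm := adjF node isout edge beta.
pose at_ := fun i e => if isout e && (node e == S) then a i e else (fun _ : nat => 0 : F).
pose bt := fun e j => if ~~ isout e && (node e == dest j) then b e j else (fun _ : nat => 0 : F).
pose G := fun (e e' : 'I_m) (u : nat) => (Fm ^+ u) e e'.
pose mser := fun i j t => \sum_e' conv (fun u => \sum_e conv (at_ i e) (G e e') u) (bt e' j) t.
have conv0 : forall (w : nat -> F) t, conv (fun _ => 0) w t = 0.
  by move=> w t; rewrite /conv big1 // => *; rewrite mul0r.
exists mser; split.
  move=> i j; rewrite /mser /M /sysM mxE.
  apply: expands_sum => e'; apply: expandsM.
    rewrite mxE; apply: expands_sum => e; apply: expandsM.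
      rewrite /at_ !mxE; case: ifP => [/andP [h1 /eqP h2]|_]; first exact: Ha.
      exact: expands0.
    exact: expands_inv.
  rewrite /bt !mxE; case: ifP => [/andP [h1 /eqP h2]|_]; first exact: Hb.
  exact: expands0.
have HY : forall t e, Y t.+1 e =
    \sum_e' Y t e' * Fm e' e + \sum_i conv (at_ i e) (fun u => X u i) t.
  move=> t e; case he: (isout e).
    rewrite HYout // big_mkcond /=; congr (_ + _).
      apply: eq_bigr => e' _; rewrite /Fm mxE.
      have -> : edge e' e = false by apply/negbTE/negP => /Hedge; rewrite he /= andbF.
      rewrite he /=; case: ifP => _; [by rewrite mulrC | by rewrite mulr0].
    rewrite /at_ he /=; case: ifP => // _.
    by rewrite big1 // => i _; rewrite conv0.
  rewrite HYin ?he // big_mkcond /= [X in _ = _ + X]big1 ?addr0; last first.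
    by move=> i _; rewrite /at_ he /= conv0.
  apply: eq_bigr => e' _; rewrite /Fm mxE.
  case: ifP => _; first by rewrite mulr1.
  by rewrite he !andbF mulr0.
move=> t j.
set N := t.
pose Yv : 'rV[{poly F}]_m := \row_e Tr N (fun u => Y u e).
pose Xv : 'rV[{poly F}]_s := \row_i Tr N (fun u => X u i).
pose Zv : 'rV[{poly F}]_r := \row_j Tr N (fun u => Z u j).
pose Ap : 'M[{poly F}]_(s, m) := \matrix_(i, e) Tr N (at_ i e).
pose Bp : 'M[{poly F}]_(m, r) := \matrix_(e, j) Tr N (bt e j).
have C1 : mxcong N.+1 Yv ('X *: (Yv *m Fp _ _ Fm + Xv *m Ap)).
  move=> z e; rewrite !mxE => -[|k] hk.
    by rewrite coef_poly /= HY0 coefXM.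
  rewrite coefXM /= coef_poly hk HY coefD !coef_sum; congr (_ + _).
    apply: eq_bigr => e' _; rewrite !mxE coefMC coef_poly.
    by rewrite (ltn_trans (ltnSn k) hk).
  apply: eq_bigr => i _; rewrite !mxE mulrC.
  rewrite (@coef_approxM _ N (at_ i e) _ _ k (approx_Tr N (at_ i e))) //; last first.
    by rewrite -ltnS (ltn_trans (ltnSn k) hk).
  rewrite /conv; apply: eq_bigr => u _; rewrite coef_poly.
  by rewrite ifT //; lia.
have C2 : mxcong N.+1 Yv ('X *: (Xv *m Ap *m Tn _ _ Fm N)).
  have C1' : mxcong N.+1 (Yv *m Pm _ _ Fm) ('X *: (Xv *m Ap)).
    rewrite /Pm mulmxBr mulmx1 -scalemxAr.
    have -> : 'X *: (Xv *m Ap) = 'X *: (Yv *m Fp _ _ Fm + Xv *m Ap) - 'X *: (Yv *m Fp _ _ Fm).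
      by rewrite scalerDr addrC addKr.
    apply: mxcongB; [exact: C1 | exact: mxcong_refl].
  have := @mxcong_mulr _ _ _ _ _ _ _ (Tn _ _ Fm N) C1'.
  rewrite -(mulmxA Yv) PT mulmxBr mulmx1 -scalemxAl => h.
  apply: mxcong_trans h.
  rewrite -[X in mxcong _ X _]subr0; apply: mxcongB; first exact: mxcong_refl.
  rewrite -scalemxAr; apply: mxcong_sym; exact: mxcongXn.
have C3 : mxcong N.+1 Zv ('X *: (Yv *m Bp)).
  move=> z j'; rewrite !mxE => -[|k] hk.
    by rewrite coef_poly /= HZ0 coefXM.
  rewrite coefXM /= coef_poly hk HZ coef_sum big_mkcond /=.
  apply: eq_bigr => e' _; rewrite !mxE mulrC.
  rewrite (@coef_approxM _ N (bt e' j') _ _ k (approx_Tr N (bt e' j'))); last by lia.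
  rewrite /bt; case: ifP => _; last by rewrite big1 // => u _; rewrite mul0r.
  rewrite /conv; apply: eq_bigr => u _; rewrite coef_poly ifT //; lia.
have C4 : mxcong N.+1 Zv ('X^2 *: (Xv *m (Ap *m Tn _ _ Fm N *m Bp))).
  apply: mxcong_trans C3 _.
  rewrite expr2 -scalerA; apply: mxcongZ.
  rewrite !mulmxA scalemxAl; apply: mxcong_mulr; exact: C2.
have A4 : forall i, approx N (mser i j) ((Ap *m Tn _ _ Fm N *m Bp) i j).
  move=> i; rewrite mxE /mser; apply: approx_sum => e'; apply: approx_conv.
    rewrite mxE; apply: approx_sum => e; apply: approx_conv.
      rewrite mxE; exact: approx_Tr.
    exact: Tn_approx.
  rewrite mxE; exact: approx_Tr.
have := C4 0 j t (ltnSn t); rewrite !mxE coef_poly ltnSn => ->.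
rewrite coefXnM; case: ifP => // ht.
rewrite coef_sum; apply: eq_bigr => i _; rewrite !mxE.
rewrite (@coef_approxM _ N (fun u => X u i) _ _ (t - 2) (approx_Tr N (fun u => X u i))); last by lia.
rewrite /conv; apply: eq_bigr => u _; rewrite (A4 i) ?mxE // /N; lia.
Qed.
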